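(* Let $p$ be a prime and $G$ a $p$-group of order $p^m$ with $|G/Z(G)|=p^2$. Then $$A_G(t)=\frac{1}{p^m}\left(\frac{p^{m-2}}{1-p^mt}+\frac{p^m-p^{m-2}}{1-p^{m-1}t}\right).$$
   Context: For a finite group $G$ and $n\ge0$, let $\alpha_{G,n}$ be the number of orbits of $G$ acting on $G^n$ by simultaneous conjugation $g\cdot(x_1,\dots,x_n)=(gx_1g^{-1},\dots,gx_ng^{-1})$, and $A_G(t)=\sum_{n\ge0}\alpha_{G,n}t^n$, viewed as a rational function of $t$. *)

(* Defs.v *)
From HB Require Import structures.
From mathcomp Require Import all_boot all_order all_algebra all_fingroup all_solvable.
Set Implicit Arguments. Unset Strict Implicit. Unset Printing Implicit Defensive.

Definition tuples_in (gT : finGroupType) (G : {group gT}) (n : nat)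
  : {set {ffun 'I_n -> gT}} :=
  [set x : {ffun 'I_n -> gT} | [forall i, x i \in G]].

Definition tconj (gT : finGroupType) (n : nat) (x : {ffun 'I_n -> gT}) (g : gT)
  : {ffun 'I_n -> gT} := [ffun i => (x i ^ g)%g].

Definition sconj_orbit (gT : finGroupType) (G : {group gT}) (n : nat)
  (x : {ffun 'I_n -> gT}) : {set {ffun 'I_n -> gT}} :=
  [set tconj x g | g in G].

Definition alpha (gT : finGroupType) (G : {group gT}) (n : nat) : nat :=
  #|[set sconj_orbit G x | x in tuples_in G n]|.

(* Main.v *)
Require Import Defs.
From HB Require Import structures.
From mathcomp Require Import all_boot all_order all_algebra all_fingroup all_solvable.
From mathcomp Require Import zify.
Import Num.Theory.
From Stdlib Require Import Lia.
Import GRing.Theory.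
Local Open Scope ring_scope.

Section Aux.
Variables (gT : finGroupType) (n : nat).
Local Open Scope group_scope.

Lemma tconj1 (x : {ffun 'I_n -> gT}) : tconj x 1%g = x.
Proof. by apply/ffunP => i; rewrite ffunE conjg1. Qed.

Lemma tconjM (x : {ffun 'I_n -> gT}) : act_morph (@tconj gT n) x.
Proof. by move=> a b; apply/ffunP => i; rewrite !ffunE conjgM. Qed.

Definition tconj_action := TotalAction tconj1 tconjM.

Lemma fix_commute (x a : gT) : (x ^ a = x)%g <-> commute x a.
Proof.
split=> [h | h].
  by rewrite /commute conjgC h.
by apply: (@mulgI _ a); rewrite -conjgC.
Qed.

Lemma card_fix (G : {group gT}) a :
  #|'Fix_(tuples_in G n | tconj_action)[a]| = (#|'C_G[a]| ^ n)%N.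
Proof.
have -> : (#|'C_G[a]| ^ n)%N = #|@ffun_on_mem 'I_n gT (mem 'C_G[a])| by rewrite card_ffun_on card_ord.
apply: eq_card => x.
rewrite inE /tuples_in inE.
apply/andP/ffun_onP => [[/forallP hG /afix1P hF] i | h].
  rewrite inE hG /=; apply/cent1P/fix_commute.
  by have := congr1 (fun f : {ffun 'I_n -> gT} => f i) hF; rewrite /= ffunE.
split; first by apply/forallP => i; have := h i; rewrite inE => /andP[].
apply/afix1P; apply/ffunP => i; rewrite /= ffunE; apply/fix_commute.
by have := h i; rewrite inE => /andP[_ /cent1P].
Qed.

Lemma burnside (G : {group gT}) :
  (\sum_(a in G) #|'C_G[a]| ^ n = alpha G n * #|G|)%N.
Proof.
have acts : [acts G, on tuples_in G n | tconj_action].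
  apply/subsetP => a aG; rewrite !inE /=; apply/subsetP => x.
  rewrite !inE /= => /forallP hx; apply/forallP => i.
  by rewrite /tconj ffunE groupJ.
rewrite -(Frobenius_Cauchy acts).
by apply: eq_bigr => a _; rewrite card_fix.
Qed.
End Aux.

Theorem lemma7p1 (gT : finGroupType) (G : {group gT}) (p m : nat) :
  prime p -> #|G| = (p ^ m)%N -> #|(G / 'Z(G))%g| = (p ^ 2)%N ->
  forall n : nat,
    (alpha G n)%:R =
      ((p ^ m)%:R : rat)^-1 *
        ((p ^ (m - 2))%:R * ((p ^ m)%:R) ^+ n
         + ((p ^ m)%:R - (p ^ (m - 2))%:R) * ((p ^ (m - 1))%:R) ^+ n).
Proof.
move=> pr cardG cardQ n.
have p1 : (1 < p)%N by apply: prime_gt1.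
have nZ : (G \subset 'N(('Z(G))%g))%g := normal_norm (center_normal G).
have sZG : ('Z(G))%g \subset G := center_sub G.
have cardZ : (#|('Z(G))%g| * p ^ 2 = p ^ m)%N.
  by rewrite -cardQ card_quotient // Lagrange.
have [k _ Zk] : exists2 k, (k <= m)%N & #|('Z(G))%g| = (p ^ k)%N.
  by apply/dvdn_pfactor => //; rewrite -cardG cardSg.
have km : (k + 2 = m)%N.
  by apply: (expnI p1); rewrite expnD -Zk.
have mk : (m - 2 = k)%N by rewrite -km addnK.
have hC : forall a, a \in G :\: ('Z(G))%g -> #|('C_G[a])%g| = (p ^ (m - 1))%N.
  move=> a; rewrite inE => /andP[aZ aG].
  have [j _ Cj] : exists2 j, (j <= m)%N & #|('C_G[a])%g| = (p ^ j)%N.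
    by apply/dvdn_pfactor => //; rewrite -cardG cardSg // subsetIl.
  have aC : a \in ('C_G[a])%g by rewrite inE aG cent1id.
  have sZC : ('Z(G))%g \subset ('C_G[a])%g.
    rewrite subsetI sZG; apply/subsetP => z /centerP [_ cz].
    by apply/cent1P; apply: cz.
  have lt1 : (#|('Z(G))%g| < #|('C_G[a])%g|)%N.
    by apply: proper_card; apply/properP; split => //; exists a.
  have lt2 : (#|('C_G[a])%g| < #|G|)%N.
    apply: proper_card; rewrite properE subsetIl /=.
    apply/negP => hGC; move/negP: aZ; apply.
    have : (G \subset ('C[a])%g)%g by apply: subset_trans hGC (subsetIr _ _).
    by rewrite sub_cent1 => aCG; rewrite /center inE aG aCG.
  rewrite Zk Cj cardG !ltn_exp2l // in lt1 lt2.
  rewrite Cj; congr (_ ^ _)%N; rewrite -km in lt2 *; lia.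
have hZ : forall a, a \in ('Z(G))%g -> ('C_G[a])%g = G.
  move=> a aZ; apply/setIidPl; rewrite sub_cent1.
  by move: aZ; rewrite /center inE => /andP[].
have nat_eq : (alpha G n * p ^ m = p ^ k * (p ^ m) ^ n + (p ^ m - p ^ k) * (p ^ (m - 1)) ^ n)%N.
  rewrite -cardG -Zk -burnside (big_setID ('Z(G))%g) /= (setIidPr sZG).
  rewrite [X in (_ + X)%N](eq_bigr (fun _ => (p ^ (m - 1)) ^ n)%N); last by move=> a aD; rewrite hC.
  rewrite [X in (X + _)%N](eq_bigr (fun _ => #|G| ^ n)%N); last by move=> a aZ; rewrite hZ.
  by rewrite !sum_nat_const cardsD (setIidPr sZG).
have pm0 : ((p ^ m)%:R : rat) != 0 by rewrite pnatr_eq0 expn_eq0 negb_and -lt0n prime_gt0.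
apply: (canRL (mulKf pm0)).
have lekm : (p ^ k <= p ^ m)%N by rewrite leq_exp2l // -km leq_addr.
rewrite mk -natrB // -!natrX -!natrM -natrD mulnC nat_eq.
by [].
Qed.
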